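(* In the group $C$, if $i,j,k$ are three distinct edges of $T$ with a common endpoint, then $u_i$ commutes with $u_ju_ku_j$. Consequently, $C$ is a quotient of the group $Y(T)$, defined as the group generated by one involution per edge of $T$ subject to relations of the forms (R1)–(R3) and these commutation relations.
   Context: Let $T$ be the graph with vertex set $\{1,\dots,18\}$ and 27 edges labelled $1,\dots,27$. Edge $j$ joins the two vertices listed after it: 1:$\{2,7\}$, 2:$\{1,13\}$, 3:$\{4,9\}$, 4:$\{1,3\}$, 5:$\{1,5\}$, 6:$\{2,3\}$, 7:$\{2,6\}$, 8:$\{3,10\}$, 9:$\{4,6\}$, 10:$\{4,5\}$, 11:$\{5,8\}$, 12:$\{6,14\}$, 13:$\{7,15\}$, 14:$\{7,11\}$, 15:$\{8,12\}$, 16:$\{8,16\}$, 17:$\{9,11\}$, 18:$\{9,17\}$, 19:$\{10,12\}$, 20:$\{10,18\}$, 21:$\{11,12\}$, 22:$\{13,15\}$, 23:$\{13,17\}$, 24:$\{14,18\}$, 25:$\{14,16\}$, 26:$\{15,16\}$, 27:$\{17,18\}$. Nine hexagons in $T$ are given by ordered 6-tuples of edges $(a_r,b_r,c_r,d_r,e_r,f_r)$, $r=1,\dots,9$: $V_1$: $(2,4,6,1,13,22)$; $V_2$: $(1,7,9,3,17,14)$; $V_3$: $(3,10,5,2,23,18)$; $V_4$: $(11,15,19,8,4,5)$; $V_5$: $(8,20,24,12,7,6)$; $V_6$: $(12,25,16,11,10,9)$; $V_7$: $(26,13,14,21,15,16)$; $V_8$: $(21,17,18,27,20,19)$; $V_9$: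 $(27,23,22,26,25,24)$. The group $C$ is generated by $u_1,\dots,u_{27}$ with the relations: (R1) $u_j^2=1$ for all $j$; (R2) $u_iu_j=u_ju_i$ whenever edges $i$ and $j$ have no common endpoint; (R3) $u_iu_ju_i=u_ju_iu_j$ whenever $i\neq j$ and edges $i,j$ share an endpoint; (R4) for each $r=1,\dots,9$: $u_{a_r}u_{b_r}u_{c_r}u_{d_r}u_{e_r}=u_{b_r}u_{c_r}u_{d_r}u_{e_r}u_{f_r}$. *)

(* Defs.v *)
(* The group C (and Y(T)) are given by presentations whose
   generators are involutions; hence they coincide with the monoids presented
   by the same relations on words over the generators.  We encode a presented
   group by the congruence it induces on words. *)
From mathcomp Require Import all_boot.
Set Implicit Arguments. Unset Strict Implicit. Unset Printing Implicit Defensive.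

(* Edge j (1 <= j <= 27) of T is the (j-1)-th entry of this list. *)
Definition ends_list : seq (nat * nat) :=
  [:: (2,7); (1,13); (4,9); (1,3); (1,5); (2,3); (2,6); (3,10); (4,6);
      (4,5); (5,8); (6,14); (7,15); (7,11); (8,12); (8,16); (9,11); (9,17);
      (10,12); (10,18); (11,12); (13,15); (13,17); (14,18); (14,16);
      (15,16); (17,18)].

Definition gen := 'I_27.
Definition lab (e : gen) : nat := (nat_of_ord e).+1.
Definition g (j : nat) : gen := inord j.-1.

Definition ends (e : gen) : nat * nat := nth (0, 0) ends_list e.
Definition incident (v : nat) (e : gen) : bool := (v == (ends e).1) || (v == (ends e).2).
Definition share (e f : gen) : bool :=
  incident (ends e).1 f || incident (ends e).2 f.

Definition hexagons : seq (seq nat) :=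
  [:: [:: 2;4;6;1;13;22]; [:: 1;7;9;3;17;14]; [:: 3;10;5;2;23;18];
      [:: 11;15;19;8;4;5]; [:: 8;20;24;12;7;6]; [:: 12;25;16;11;10;9];
      [:: 26;13;14;21;15;16]; [:: 21;17;18;27;20;19]; [:: 27;23;22;26;25;24]].

Inductive coxrel : seq gen -> seq gen -> Prop :=
| R1 x : coxrel [:: x; x] [::]
| R2 x y : ~~ share x y -> coxrel [:: x; y] [:: y; x]
| R3 x y : x != y -> share x y -> coxrel [:: x; y; x] [:: y; x; y].

Inductive Crel : seq gen -> seq gen -> Prop :=
| C_cox l r : coxrel l r -> Crel l r
| C_hex a b c d e f :
    [:: a; b; c; d; e; f] \in hexagons ->
    Crel [:: g a; g b; g c; g d; g e] [:: g b; g c; g d; g e; g f].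

Inductive Yrel : seq gen -> seq gen -> Prop :=
| Y_cox l r : coxrel l r -> Yrel l r
| Y_comm i j k v : i != j -> j != k -> i != k ->
    incident v i -> incident v j -> incident v k ->
    Yrel [:: i; j; k; j] [:: j; k; j; i].

Inductive word_eq (R : seq gen -> seq gen -> Prop) : seq gen -> seq gen -> Prop :=
| we_rel l r : R l r -> word_eq R l r
| we_refl w : word_eq R w w
| we_sym w1 w2 : word_eq R w1 w2 -> word_eq R w2 w1
| we_trans w1 w2 w3 : word_eq R w1 w2 -> word_eq R w2 w3 -> word_eq R w1 w3
| we_ctx p q l r : word_eq R l r -> word_eq R (p ++ l ++ q) (p ++ r ++ q).

(* Main.v *)
Require Import Defs.
From mathcomp Require Import all_boot.

Section W.
Variable R : seq gen -> seq gen -> Prop.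
Lemma rw_at n l r w w2 : word_eq R l r ->
  take n w ++ l ++ drop (n + size l) w = w ->
  word_eq R (take n w ++ r ++ drop (n + size l) w) w2 -> word_eq R w w2.
Proof. move=> H E H2; rewrite -E; apply: we_trans H2; exact: we_ctx. Qed.
End W.
Arguments rw_at {R} n {l r w w2}.

Ltac rwn n H := apply: (rw_at n H); [reflexivity | simpl].
Ltac rwh H := first [rwn 0 H | rwn 1 H | rwn 2 H | rwn 3 H | rwn 4 H | rwn 5 H
  | rwn 6 H | rwn 7 H | rwn 8 H | rwn 9 H | rwn 10 H | rwn 11 H | rwn 12 H
  | rwn 13 H | rwn 14 H | rwn 15 H | rwn 16 H | rwn 17 H | rwn 18 H | rwn 19 H
  | rwn 20 H].

Lemma cm x y : ~~ share x y -> word_eq Crel [::x;y] [::y;x].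
Proof. by move=> H; apply/we_rel/C_cox/R2. Qed.
Lemma br x y : x != y -> share x y -> word_eq Crel [::x;y;x] [::y;x;y].
Proof. by move=> H1 H2; apply/we_rel/C_cox/R3. Qed.
Lemma ca x : word_eq Crel [::x;x] [::].
Proof. by apply/we_rel/C_cox/R1. Qed.
Lemma ins x : word_eq Crel [::] [::x;x].
Proof. exact/we_sym/ca. Qed.

Definition Hex (s : seq gen) : Prop :=
  match s with [:: a;b;c;d;e;f] => word_eq Crel [::a;b;c;d;e] [::b;c;d;e;f] | _ => False end.

Definition adj x y := (x != y) && share x y.
Definition na x y := ~~ share x y.
Definition good (s : seq gen) : bool :=
  match s with [:: a;b;c;d;e;f] =>
    [&& adj a b, adj b a, adj b c, adj c b, adj c d, adj d c, adj d e, adj e d,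
        adj e f, adj f e, adj f a, adj a f, na a c, na c a, na a d, na d a,
        na a e, na e a, na b d, na d b, na b e, na e b, na b f, na f b,
        na c e, na e c, na c f, na f c, na d f & na f d]
  | _ => false end.

Ltac splitall := repeat match goal with H : is_true (_ && _) |- _ => case/andP: H => ? ? end.

Lemma hexJ {a b c d e f : gen} : word_eq Crel [::a;b;c;d;e] [::b;c;d;e;f] ->
  word_eq Crel [::f] [::e;d;c;b;a;b;c;d;e].
Proof.
move=> H.
rwn 0 (ins e). rwn 1 (ins d). rwn 2 (ins c). rwn 3 (ins b).
rwh (we_sym H). exact: we_refl.
Qed.

Lemma Hex_rot s : good s -> Hex s -> Hex (rot 1 s).
Proof.
case: s => [|a [|b [|c [|d [|e [|f [|? ?]]]]]]] //= G H.
rewrite /adj /na in G; splitall.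
apply: we_sym.
rwh (hexJ H).
rwh (ca e). rwh (ca d). rwh (ca c).
rwh (br b a ltac:(done) ltac:(done)).
rwh (cm a c ltac:(done)). rwh (cm a d ltac:(done)). rwh (cm a e ltac:(done)).
rwh (ca a). rwh H. exact: we_refl.
Qed.

Lemma Hex_rev s : Hex s -> Hex (rev s).
Proof.
case: s => [|a [|b [|c [|d [|e [|f [|? ?]]]]]]] //= H.
rewrite /rev /=.
rwh (hexJ H). rwh (ca e). rwh (ca d). rwh (ca c). rwh (ca b). exact: we_refl.
Qed.

Lemma vertex_comm i x2 x3 x4 x5 j k : good [::i;x2;x3;x4;x5;j] ->
  Hex [::i;x2;x3;x4;x5;j] -> ~~ share k x2 -> ~~ share k x3 ->
  ~~ share k x4 -> ~~ share k x5 -> word_eq Crel [::i;j;k;j] [::j;k;j;i].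
Proof.
move=> G H k2 k3 k4 k5; rewrite /= /adj /na in G H; splitall.
have J := hexJ H.
apply: we_trans (_ : word_eq Crel _ [:: x5;x4;x3;x2;i;k;i;x2;x3;x4;x5;i]) _.
  rwh J. rwh (we_sym (cm k x5 k5)). rwh (we_sym (cm k x4 k4)).
  rwh (we_sym (cm k x3 k3)). rwh (we_sym (cm k x2 k2)).
  rwh J.
  rwh (ca x5). rwh (ca x4). rwh (ca x3). rwh (ca x2).
  rwh (cm i x5 ltac:(done)). rwh (cm i x4 ltac:(done)). rwh (cm i x3 ltac:(done)).
  rwh (br i x2 ltac:(done) ltac:(done)).
  rwh (we_sym (cm k x2 k2)).
  rwh (br x2 i ltac:(done) ltac:(done)).
  rwh (cm i x3 ltac:(done)).
  rwh (cm i x4 ltac:(done)).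
  rwh (cm i x5 ltac:(done)).
  exact: we_refl.
apply: we_sym.
rwh J. rwh (we_sym (cm k x5 k5)). rwh (we_sym (cm k x4 k4)).
rwh (we_sym (cm k x3 k3)). rwh (we_sym (cm k x2 k2)).
rwh J.
rwh (ca x5). rwh (ca x4). rwh (ca x3). rwh (ca x2).
exact: we_refl.
Qed.


Definition g' (j : nat) : gen := Ordinal (ltn_pmod j.-1 (isT : 0 < 27)).

Lemma g_g' h : h \in hexagons -> map g h = map g' h.
Proof.
move=> hin; apply/eq_in_map => x xin; apply/val_inj => /=.
have xl : x.-1 < 27.
  move: x xin; apply/allP; move: h hin; apply/allP; by vm_compute.
by rewrite inordK // modn_small.
Qed.

Definition forms_of (s : seq gen) : seq (seq gen) :=
  [seq rot n s | n <- iota 0 6] ++ [seq rot n (rev s) | n <- iota 0 6].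
Definition forms : seq (seq gen) := flatten [seq forms_of (map g' h) | h <- hexagons].

Lemma forms_good : all good forms.
Proof. by vm_compute. Qed.

Lemma base_Hex h : h \in hexagons -> Hex (map g' h).
Proof.
move=> H; rewrite -g_g' //.
have : size h == 6 by move: h H; apply/allP; vm_compute.
case: h H => [|a [|b [|c [|d [|e [|f [|? ?]]]]]]] //= H _.
exact: we_rel (C_hex H).
Qed.

Lemma rot_Hex s n : size s = 6 -> (forall m, m < 6 -> good (rot m s)) -> Hex s ->
  n < 6 -> Hex (rot n s).
Proof.
move=> Hs G H; elim: n => [|n IH] Hn; first by rewrite rot0.
have -> : rot n.+1 s = rot 1 (rot n s) by rewrite rotS // Hs ltnW.
apply: Hex_rot; first exact: G (ltnW Hn).
exact: IH (ltnW Hn).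
Qed.

Lemma forms_Hex s : s \in forms -> Hex s.
Proof.
case/flattenP => F /mapP [h hin ->] sin.
have Hs : size (map g' h) = 6.
  by rewrite size_map; apply/eqP; move: h hin {sin}; apply/allP; vm_compute.
have Gs : forall t, t \in forms_of (map g' h) -> good t.
  move=> t tin; apply: (allP forms_good); apply/flattenP.
  by exists (forms_of (map g' h)) => //; exact: (map_f (fun h => forms_of (map g' h)) hin).
move: sin; rewrite mem_cat => /orP [] /mapP [n]; rewrite mem_iota add0n => /andP [_ nlt] ->.
- apply: rot_Hex => //; first by move=> m mlt; apply: Gs; rewrite mem_cat; apply/orP; left;
    apply/mapP; exists m => //; rewrite mem_iota.
  exact: base_Hex.
- apply: rot_Hex => //; first by rewrite size_rev.
  + by move=> m mlt; apply: Gs; rewrite mem_cat; apply/orP; right;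
      apply/mapP; exists m => //; rewrite mem_iota.
  + exact/Hex_rev/base_Hex.
Qed.

Definition common3 i j k :=
  (incident (ends i).1 j && incident (ends i).1 k) ||
  (incident (ends i).2 j && incident (ends i).2 k).

Definition okb (i j k : gen) := has (fun s => match s with
  [:: a;x2;x3;x4;x5;b] => [&& a == i, b == j, ~~share k x2, ~~share k x3,
                           ~~share k x4 & ~~share k x5]
  | _ => false end) forms.

Definition ords : seq gen := [seq g' n | n <- iota 1 27].

Lemma in_ords (i : gen) : i \in ords.
Proof.
apply/mapP; exists i.+1; first by rewrite mem_iota /= add1n ltnS ltn_ord.
by apply/val_inj; rewrite /= modn_small.
Qed.

Lemma allok : all (fun i => all (fun j => all (fun k =>
  ((i != j) && (j != k) && (i != k) && common3 i j k) ==> okb i j k) ords) ords) ords.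
Proof. by vm_compute. Qed.

Theorem corollary4p2 :
  (forall (i j k : gen) (v : nat), i != j -> j != k -> i != k ->
     incident v i -> incident v j -> incident v k ->
     word_eq Crel [:: i; j; k; j] [:: j; k; j; i])
  /\
  (forall w1 w2 : seq gen, word_eq Yrel w1 w2 -> word_eq Crel w1 w2).
Proof.
have P1 : forall (i j k : gen) (v : nat), i != j -> j != k -> i != k ->
     incident v i -> incident v j -> incident v k ->
     word_eq Crel [:: i; j; k; j] [:: j; k; j; i].
  move=> i j k v ij jk ik vi vj vk.
  have C : common3 i j k.
    by rewrite /common3; move: vi vj vk; rewrite /incident => /orP [] /eqP -> -> ->; rewrite ?orbT.
  move: allok => /allP /(_ i (in_ords i)) /allP /(_ j (in_ords j)) /allP /(_ k (in_ords k)).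
  rewrite ij jk ik C /= => /hasP [s sin H].
  have Hs := forms_Hex _ sin.
  have Gs : good s by move: forms_good => /allP; apply.
  case: s sin Hs Gs H => [|a [|x2 [|x3 [|x4 [|x5 [|b [|? ?]]]]]]] //= _ Hs Gs.
  case/and5P => /eqP ea /eqP eb k2 k3 /andP [k4 k5]; subst a b.
  exact: vertex_comm Gs Hs k2 k3 k4 k5.
split => //.
move=> w1 w2; elim => [l r [l' r' H|i j k v ij jk ik vi vj vk] | w | w1' w2' _ IH
  | w1' w2' w3' _ IH1 _ IH2 | p q l r _ IH].
- exact/we_rel/C_cox.
- exact: P1 ij jk ik vi vj vk.
- exact: we_refl.
- exact: we_sym.
- exact: we_trans IH1 IH2.
- exact: we_ctx.
Qed.
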